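(* Let $p\in S_m$ avoid the pattern $321$. Then for every $n\ge 2$ there are only finitely many $\omega\in\widetilde{S}_n$ that avoid $p$.
   Context: For $n\ge 2$, the affine symmetric group $\widetilde{S}_n$ is the set of bijections $\omega:\mathbb{Z}\to\mathbb{Z}$ such that $\omega(i+n)=\omega(i)+n$ for all $i\in\mathbb{Z}$ and $\sum_{i=1}^n\omega(i)=\binom{n+1}{2}$; write $\omega_i=\omega(i)$. For $p\in S_k$, $\omega$ contains $p$ if there exist integers $i_1<\cdots<i_k$ such that $\omega_{i_1}\cdots\omega_{i_k}$ has the same relative order as $p_1\cdots p_k$; otherwise $\omega$ avoids $p$. Containment between ordinary permutations is defined the same way. *)

(* Defs.v *)
From mathcomp Require Import all_boot all_order all_algebra all_fingroup.
Set Implicit Arguments. Unset Strict Implicit. Unset Printing Implicit Defensive.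
Import Order.TTheory GRing.Theory Num.Theory.
Local Open Scope ring_scope.

Definition is_affine_perm (n : nat) (omega : int -> int) : Prop :=
  bijective omega /\
  (forall i : int, omega (i + n%:Z) = omega i + n%:Z) /\
  \sum_(i < n) omega (i.+1)%:Z = ('C(n.+1, 2))%:Z.

Definition aff_contains (k : nat) (p : 'S_k) (omega : int -> int) : Prop :=
  exists f : 'I_k -> int,
    (forall a b : 'I_k, (a < b)%N -> f a < f b) /\
    (forall a b : 'I_k, (omega (f a) < omega (f b)) = (p a < p b)%N).

Definition aff_avoids (k : nat) (p : 'S_k) (omega : int -> int) : Prop :=
  ~ aff_contains p omega.

Definition avoids321 (m : nat) (p : 'S_m) : Prop :=
  ~ exists a b c : 'I_m, [/\ (a < b)%N, (b < c)%N, (p b < p a)%N & (p c < p b)%N].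

(* Main.v *)
Require Import Defs.
From mathcomp Require Import all_boot all_order all_algebra all_fingroup.
From Stdlib Require Import ZArith Lia.
From mathcomp Require Import ssrnat.
Set Implicit Arguments. Unset Strict Implicit. Unset Printing Implicit Defensive.
Import Order.TTheory GRing.Theory Num.Theory.
Local Open Scope ring_scope.
Definition zI (x : int) : Z := match x with Posz a => Z.of_nat a | Negz a => (- Z.of_nat a - 1)%Z end.
Ltac zfix := rewrite ?Nat2Z.inj_succ -?Pos2Z.opp_pos ?Zpos_P_of_succ_nat.
Lemma zI_add (x y : int) : zI (x + y) = (zI x + zI y)%Z.
Proof.
case: x y => a [] b; rewrite /GRing.add /= /intZmod.addz /=.
- rewrite -plusE; lia.
- case: (ltnP b a) => /ssrnat.leP H /=; rewrite -?minusE; zfix; lia.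
- case: (ltnP a b) => /ssrnat.leP H /=; rewrite -?minusE; zfix; lia.
- rewrite -plusE; zfix; lia.
Qed.
Lemma zI_opp (x : int) : zI (- x) = (- zI x)%Z.
Proof. case: x => [[|a]|a] /=; zfix; lia. Qed.
Lemma zI_mul (x y : int) : zI (x * y) = (zI x * zI y)%Z.
Proof.
case: x y => a [] b; rewrite /GRing.mul /= /intRing.mulz /= -?multE; try lia.
all: case E: (_ * _)%coq_nat => [|k]; simpl; zfix; nia.
Qed.
Lemma zI_nat (n : nat) : zI n%:Z = Z.of_nat n. Proof. by []. Qed.
Lemma leZ (x y : int) : reflect (zI x <= zI y)%Z (x <= y).
Proof.
apply: (iffP idP); case: x y => a [] b; rewrite /Order.le /= /intOrdered.lez /=;
 try (move/ssrnat.leP); try (move=> H; apply/ssrnat.leP); zfix; try lia.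
all: by [].
Qed.
Lemma ltZ (x y : int) : reflect (zI x < zI y)%Z (x < y).
Proof.
apply: (iffP idP); case: x y => a [] b; rewrite /Order.lt /= /intOrdered.ltz /=;
 try (move/ssrnat.ltP); try (move=> H; apply/ssrnat.ltP); zfix; try lia; by [].
Qed.
Lemma eqZ (x y : int) : x = y <-> zI x = zI y.
Proof. split; first by move->. case: x y => a [] b /=; zfix; try lia; move=> H; have -> : a = b by lia. all: by []. Qed.
Lemma zI_one : zI 1 = 1%Z. Proof. by []. Qed.
Lemma zI_zero : zI 0 = 0%Z. Proof. by []. Qed.
Lemma zI_Negz k : zI (Negz k) = (- Z.of_nat k - 1)%Z. Proof. by []. Qed.
Create HintDb zIdb.
#[global] Hint Rewrite zI_add zI_opp zI_mul zI_nat zI_one zI_zero zI_Negz : zIdb.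

Ltac zconv := repeat match goal with
 | H : is_true (@Order.le _ _ ?x ?y) |- _ => let T := type of x in unify T int; move/leZ: H => H
 | H : is_true (@Order.lt _ _ ?x ?y) |- _ => let T := type of x in unify T int; move/ltZ: H => H
 | H : @eq ?T ?x ?y |- _ => unify T int; move/eqZ: H => H
 end;
 try match goal with
 | |- is_true (@Order.le _ _ ?x ?y) => apply/leZ
 | |- is_true (@Order.lt _ _ ?x ?y) => apply/ltZ
 | |- @eq ?T _ _ => unify T int; apply/eqZ
 end; autorewrite with zIdb in *; try change (zI 0) with 0%Z in *; try change (zI 1) with 1%Z in *.
Ltac zlia := intros; zconv; lia.


Lemma line (n : nat) (w : int -> int) (Hper : forall i : int, w (i + n%:Z) = w i + n%:Z)
  (r q : int) : w (r + q * n%:Z) = w r + q * n%:Z.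
Proof.
have P1 : forall k : nat, w (r + k%:Z * n%:Z) = w r + k%:Z * n%:Z.
  elim=> [|k IH]; first by rewrite mul0r !addr0.
  have EE : r + (k.+1)%:Z * n%:Z = (r + k%:Z * n%:Z) + n%:Z  by zlia.
  rewrite EE Hper IH; zlia.
have P2 : forall k : nat, w (r - k%:Z * n%:Z) = w r - k%:Z * n%:Z.
  elim=> [|k IH]; first by rewrite mul0r subr0 addr0.
  have E := Hper (r - (k.+1)%:Z * n%:Z).
  have E2 : r - (k.+1)%:Z * n%:Z + n%:Z = r - k%:Z * n%:Z by zlia.
  rewrite E2 IH in E. zlia.
case: q => k; first exact: P1.
have -> : Negz k * n%:Z = - ((k.+1)%:Z * n%:Z) by zlia.
exact: P2.
Qed.

Lemma max_in (ls : seq int) : ls != [::] -> exists2 L, L \in ls & forall l, l \in ls -> l <= L.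
Proof.
elim: ls => [//|x [|y rest] IH] _.
- exists x; first by rewrite inE. by move=> l; rewrite inE => /eqP ->.
- have [L HL HLm] := IH isT.
  case: (lerP x L) => H.
  + exists L; first by rewrite inE HL orbT.
    move=> l; rewrite inE => /orP [/eqP -> //|]; exact: HLm.
  + exists x; first by rewrite inE eqxx.
    move=> l; rewrite inE => /orP [/eqP -> //|/HLm H2]. zlia.
Qed.

Lemma slot (n : nat) (Hn : (0 < n)%N) (ls : seq int) (Hls : ls != [::]) (s : int) :
  exists q : int, (forall l, l \in ls -> l < s + q * n%:Z) /\
                  (exists2 l, l \in ls & s + q * n%:Z <= l + n%:Z).
Proof.
have [L HL HLm] := max_in Hls.
have nz : (n%:Z != 0) by rewrite eqz_nat -lt0n.
have E := divz_eq (L - s) n%:Z.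
have H0 := modz_ge0 (L - s) nz.
have H1 : modz (L - s) n%:Z < n%:Z by apply: ltz_pmod; rewrite ltz_nat.
exists (divz (L - s) n%:Z + 1); split.
- move=> l /HLm Hl. zlia.
- exists L => //. zlia.
Qed.

Definition pn m (p : 'S_m) (a : nat) : nat :=
  odflt 0%N (omap (fun i : 'I_m => val (p i)) (insub a)).
Definition Ub m (p : 'S_m) (a : nat) : bool :=
  all (fun b => (pn p b < pn p a)%N) (iota 0 a).

Lemma pnE m (p : 'S_m) (i : 'I_m) : pn p i = p i.
Proof. by rewrite /pn valK. Qed.

Lemma pn_inj m (p : 'S_m) a b : (a < m)%N -> (b < m)%N -> pn p a = pn p b -> a = b.
Proof.
move=> Ha Hb; rewrite -[a]/(val (Ordinal Ha)) -[b]/(val (Ordinal Hb)) !pnE.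
by move/val_inj/perm_inj => ->.
Qed.

Lemma Ub_lt m (p : 'S_m) a b : Ub p a -> (b < a)%N -> (pn p b < pn p a)%N.
Proof. by move/allP => H Hb; apply: H; rewrite mem_iota. Qed.

Lemma notUb m (p : 'S_m) a : (a < m)%N -> ~~ Ub p a -> exists2 e, (e < a)%N & (pn p a < pn p e)%N.
Proof.
move=> Ha /allPn [e]; rewrite mem_iota /= => He; rewrite -leqNgt leq_eqVlt => /orP [/eqP E|H].
- have Hem : (e < m)%N by apply: ltn_trans Ha; rewrite add0n in He.
  by have := pn_inj Hem Ha (esym E) => Eq; rewrite Eq ltnn in He.
- by exists e.
Qed.

Lemma F1 m (p : 'S_m) a b : Ub p a -> Ub p b -> (pn p a < pn p b)%N -> (a < b)%N.
Proof.
move=> Ua Ub_ H; case: (ltngtP a b) => // [Hba|Eab].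
- by have := Ub_lt Ua Hba; rewrite ltnNge (ltnW H).
- by rewrite Eab ltnn in H.
Qed.

Lemma F2 m (p : 'S_m) (Hp : avoids321 p) d t : (d < t)%N -> (t < m)%N -> ~~ Ub p d -> (pn p d < pn p t)%N.
Proof.
move=> Hdt Htm Hd.
have Hdm : (d < m)%N by apply: ltn_trans Htm.
have [e He1 He2] := notUb Hdm Hd.
have Hem : (e < m)%N by apply: ltn_trans Hdm.
case: (ltngtP (pn p d) (pn p t)) => // [H|E].
- exfalso; apply: Hp; exists (Ordinal Hem), (Ordinal Hdm), (Ordinal Htm).
  by rewrite /= -!pnE /=.
- by have := pn_inj Hdm Htm E => Eq; rewrite Eq ltnn in Hdt.
Qed.

Lemma orient (A B : int) (c d : nat) :
  (A < B /\ (c < d)%N) \/ (B < A /\ (d < c)%N) -> (A < B) = (c < d)%N /\ (B < A) = (d < c)%N.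
Proof.
case=> [[H1 H2]|[H1 H2]].
- rewrite H1 H2; split=> //. rewrite ltNge (ltW H1) /=. by apply/esym/negbTE; rewrite -leqNgt ltnW.
- rewrite H1 H2; split=> //. rewrite ltNge (ltW H1) /=. by apply/esym/negbTE; rewrite -leqNgt ltnW.
Qed.

Lemma ltS_case a t : (a < t.+1)%N -> a = t \/ (a < t)%N.
Proof. by rewrite ltnS leq_eqVlt => /orP [/eqP ->|H]; [left|right]. Qed.

Definition Mz (n m t : nat) : int := ((n.+1) * 3 ^ (m - t))%N%:Z.

Lemma Mz_facts n m t : (t < m)%N ->
  [/\ Mz n m t = 3%:Z * Mz n m t.+1, (n.+1)%:Z <= Mz n m t.+1 & Mz n m t.+1 <= Mz n m 0].
Proof.
move=> Ht; rewrite /Mz; split.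
- rewrite -(subnSK Ht) expnS -PoszM; congr Posz.
  by rewrite mulnCA.
- rewrite lez_nat -{1}(muln1 n.+1) leq_mul2l /=; exact: expn_gt0.
- rewrite lez_nat leq_mul2l /=; apply: leq_pexp2l => //; rewrite subn0; exact: leq_subr.
Qed.

Definition Inv n m (p : 'S_m) (w : int -> int) (r s : int) (t : nat) (X : nat -> int) : Prop :=
 [/\ (forall a b, (a < b)%N -> (b < t)%N -> X a < X b),
     (forall a b, (a < t)%N -> (b < t)%N -> (w (X a) < w (X b)) = (pn p a < pn p b)%N),
     (forall a, (a < t)%N -> w (X a) = X a + (if Ub p a then w r - r else w s - s)),
     (forall a b, (a < b)%N -> (b < t)%N -> Ub p a -> Ub p b -> X a + Mz n m t <= X b) &
     (forall a, (a < t)%N -> Ub p a ->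
        (forall d, (d < t)%N -> ~~ Ub p d -> (pn p d < pn p a)%N) ->
        X t.-1 + Mz n m t <= X a + ((w r - r) - (w s - s)))].

Lemma Inv0 n m p w r s : @Inv n m p w r s 0 (fun _ => 0).
Proof. by split. Qed.

Lemma le_last (t : nat) (X : nat -> int) :
  (forall a b, (a < b)%N -> (b < t)%N -> X a < X b) -> forall a, (a < t)%N -> X a <= X t.-1.
Proof.
move=> I1 a Ha; case: (ltnP a t.-1) => H.
- apply: ltW; apply: I1 => //; move/ssrnat.ltP: Ha => Ha; apply/ssrnat.ltP; lia.
- have -> : a = t.-1 by move/ssrnat.ltP: Ha; move/ssrnat.leP: H; lia.
  by [].
Qed.

Lemma stepU n m (p : 'S_m) w r s t X (Hn : (0 < n)%N)
  (Hper : forall i : int, w (i + n%:Z) = w i + n%:Z)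
  (Hg : Mz n m 0 <= (w r - r) - (w s - s)) (Ht : (t < m)%N) (HU : Ub p t) :
  @Inv n m p w r s t X -> exists X', @Inv n m p w r s t.+1 X'.
Proof.
case=> I1 I2 I3 IB IA.
have [HM HM1 HM0] := Mz_facts n Ht.
have [q [Hq1 [l Hl Hq2]]] := @slot n Hn [:: X t.-1 + Mz n m t.+1 - 1] isT r.
move: Hl; rewrite inE => /eqP El; subst l.
have Hq1' := Hq1 _ (mem_head _ _).
have wx : w (r + q * n%:Z) = (r + q * n%:Z) + (w r - r) by rewrite line //; zlia.
move: (r + q * n%:Z) Hq1' Hq2 wx => x Hq1' Hq2 wx.
have LL := le_last I1.
exists (fun a => if a == t then x else X a).
have Xo : forall a, (a < t)%N -> (if a == t then x else X a) = X a.
  by move=> a Ha; rewrite (ltn_eqF Ha).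
have Hlt : forall b, (b < t)%N -> w (X b) < w x.
  move=> b Hb; have := LL b Hb; rewrite I3 // wx; case: (Ub p b) => H; zlia.
split.
- move=> a b Hab; move=> /ltS_case [Eb|Hb].
  + subst b; rewrite Xo // eqxx. have := LL a Hab. zlia.
  + by rewrite !Xo //; [apply: I1 | apply: ltn_trans Hb].
- move=> a b; move=> /ltS_case [Ea|Ha] /ltS_case [Eb|Hb].
  + by subst; rewrite eqxx ltxx ltnn.
  + subst a; rewrite eqxx Xo //.
    by case: (orient (or_introl (conj (Hlt b Hb) (Ub_lt HU Hb)))).
  + subst b; rewrite eqxx Xo //.
    by case: (orient (or_introl (conj (Hlt a Ha) (Ub_lt HU Ha)))).
  + by rewrite !Xo //; apply: I2.
- move=> a; move=> /ltS_case [Ea|Ha].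
  + by subst a; rewrite eqxx HU wx.
  + by rewrite Xo //; apply: I3.
- move=> a b Hab; move=> /ltS_case [Eb|Hb] Ua Ubb.
  + subst b; rewrite Xo // eqxx. have := LL a Hab. zlia.
  + rewrite !Xo //; last by apply: ltn_trans Hb.
    have := IB a b Hab Hb Ua Ubb. zlia.
- move=> a; rewrite /= eqxx => /ltS_case [Ea|Ha] Ua P.
  + subst a; rewrite eqxx. zlia.
  + rewrite Xo //.
    have := IA a Ha Ua (fun d Hd => P d (ltnW Hd)). zlia.
Qed.

Lemma stepD n m (p : 'S_m) w r s t X (Hn : (0 < n)%N)
  (Hper : forall i : int, w (i + n%:Z) = w i + n%:Z) (Hp : avoids321 p)
  (Hg : Mz n m 0 <= (w r - r) - (w s - s)) (Ht : (t < m)%N) (HU : ~~ Ub p t) :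
  @Inv n m p w r s t X -> exists X', @Inv n m p w r s t.+1 X'.
Proof.
case=> I1 I2 I3 IB IA.
have [HM HM1 HM0] := Mz_facts n Ht.
have t0 : (0 < t)%N by rewrite lt0n; apply/eqP => E; move: HU; rewrite E.
pose ls := [seq X b | b <- iota 0 t] ++
   [seq X b + ((w r - r) - (w s - s)) | b <- [seq b <- iota 0 t | Ub p b && (pn p b < pn p t)%N]].
have Hls : ls != [::] by rewrite /ls -(prednK t0).
have [q [Hall [l Hl Hq2]]] := @slot n Hn ls Hls s.
have wx : w (s + q * n%:Z) = (s + q * n%:Z) + (w s - s) by rewrite line //; zlia.
move: (s + q * n%:Z) Hall Hq2 wx => x Hall Hq2 wx.
have LL := le_last I1.
have Hmem1 : forall b, (b < t)%N -> X b < x.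
  by move=> b Hb; apply: Hall; rewrite mem_cat map_f // mem_iota.
have Hmem2 : forall b, (b < t)%N -> Ub p b -> (pn p b < pn p t)%N -> X b + ((w r - r) - (w s - s)) < x.
  move=> b Hb U1 U2; apply: Hall; rewrite mem_cat; apply/orP; right.
  by apply: map_f; rewrite mem_filter U1 U2 mem_iota.
have KB : forall u, (u < t)%N -> Ub p u -> (pn p t < pn p u)%N ->
    x + Mz n m t <= X u + ((w r - r) - (w s - s)) + n%:Z.
  move=> u Hu Uu Htu.
  move: Hl Hq2; rewrite mem_cat => /orP [/mapP [b Hb ->] | /mapP [b Hb ->]].
  - have Hb' : (b < t)%N by move: Hb; rewrite mem_iota.
    have := IA u Hu Uu (fun d Hd Ud => ltn_trans (F2 Hp Hd Ht Ud) Htu).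
    have := LL b Hb'. zlia.
  - move: Hb; rewrite mem_filter mem_iota => /andP [/andP [Ubb Hbt] Hb'].
    have Hbu : (b < u)%N by apply: (F1 Ubb Uu); apply: ltn_trans Htu.
    have := IB b u Hbu Hu Ubb Uu. zlia.
have Hor : forall b, (b < t)%N ->
   (w (X b) < w x /\ (pn p b < pn p t)%N) \/ (w x < w (X b) /\ (pn p t < pn p b)%N).
  move=> b Hb; case Ubb: (Ub p b).
  - case: (ltngtP (pn p b) (pn p t)) => Hc.
    + left; split => //; rewrite I3 // Ubb wx; have := Hmem2 b Hb Ubb Hc; zlia.
    + right; split => //; rewrite I3 // Ubb wx; have := KB b Hb Ubb Hc; zlia.
    + have := pn_inj (ltn_trans Hb Ht) Ht Hc => E; by rewrite E ltnn in Hb.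
  - left; split; last exact: (F2 Hp Hb Ht (negbT Ubb)).
    rewrite I3 // Ubb wx; have := Hmem1 b Hb; zlia.
exists (fun a => if a == t then x else X a).
have Xo : forall a, (a < t)%N -> (if a == t then x else X a) = X a.
  by move=> a Ha; rewrite (ltn_eqF Ha).
split.
- move=> a b Hab; move=> /ltS_case [Eb|Hb].
  + subst b; rewrite Xo // eqxx. exact: Hmem1.
  + by rewrite !Xo //; [apply: I1 | apply: ltn_trans Hb].
- move=> a b; move=> /ltS_case [Ea|Ha] /ltS_case [Eb|Hb].
  + by subst; rewrite eqxx ltxx ltnn.
  + subst a; rewrite eqxx Xo //. by case: (orient (Hor b Hb)).
  + subst b; rewrite eqxx Xo //. by case: (orient (Hor a Ha)).
  + by rewrite !Xo //; apply: I2.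
- move=> a; move=> /ltS_case [Ea|Ha].
  + by subst a; rewrite eqxx (negbTE HU) wx.
  + by rewrite Xo //; apply: I3.
- move=> a b Hab; move=> /ltS_case [Eb|Hb] Ua Ubb.
  + by subst b; rewrite Ubb in HU.
  + rewrite !Xo //; last by apply: ltn_trans Hb.
    have := IB a b Hab Hb Ua Ubb. zlia.
- move=> a; rewrite /= eqxx => /ltS_case [Ea|Ha] Ua P.
  + by subst a; rewrite Ua in HU.
  + rewrite Xo //.
    have := KB a Ha Ua (P t (ltnSn t) HU). zlia.
Qed.

Lemma build n m (p : 'S_m) w r s (Hn : (0 < n)%N)
  (Hper : forall i : int, w (i + n%:Z) = w i + n%:Z) (Hp : avoids321 p)
  (Hg : Mz n m 0 <= (w r - r) - (w s - s)) :
  forall t, (t <= m)%N -> exists X, @Inv n m p w r s t X.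
Proof.
elim=> [|t IH] Ht; first by exists (fun _ => 0); exact: Inv0.
have [X HX] := IH (ltnW Ht).
case HU: (Ub p t).
- exact: stepU HX.
- by apply: stepD HX => //; rewrite HU.
Qed.

Lemma contains_big n m (p : 'S_m) w r s (Hn : (0 < n)%N)
  (Hper : forall i : int, w (i + n%:Z) = w i + n%:Z) (Hp : avoids321 p)
  (Hg : Mz n m 0 <= (w r - r) - (w s - s)) : aff_contains p w.
Proof.
have [X [I1 I2 _ _ _]] := build Hn Hper Hp Hg (leqnn m).
exists (fun i => X i); split.
- by move=> a b Hab; apply: I1.
- by move=> a b; rewrite I2 // !pnE.
Qed.

Lemma avoid_bound n m (p : 'S_m) w (Hn : (0 < n)%N)
  (Hper : forall i : int, w (i + n%:Z) = w i + n%:Z) (Hp : avoids321 p)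
  (Hav : aff_avoids p w) : forall r s, (w r - r) - (w s - s) < Mz n m 0.
Proof.
move=> r s; rewrite ltNge; apply/negP => H; apply: Hav; exact: contains_big H.
Qed.

Fixpoint seqs (K k : nat) : seq (seq nat) :=
  if k is k'.+1 then [seq x :: v | x <- iota 0 K, v <- seqs K k'] else [:: [::]].

Lemma mem_seqs K k (v : seq nat) : size v = k -> all (fun x => (x < K)%N) v -> v \in seqs K k.
Proof.
elim: k v => [|k IH] [|x v] //=.
move=> [Hs] /andP [Hx Hv]. apply: allpairs_f; first by rewrite mem_iota.
exact: IH.
Qed.

Lemma sum_nat_int n : \sum_(i < n) (i.+1)%:Z = ('C(n.+1, 2))%:Z.
Proof.
rewrite -(big_morph Posz PoszD (erefl 0%:Z)); congr Posz.
rewrite -bin2_sum big_mkord big_ord_recl /= add0n.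
by apply: eq_bigr => i _; rewrite /bump add1n.
Qed.

Theorem proposition3p3 (m : nat) (p : 'S_m) (Hp : avoids321 p) (n : nat) (Hn : (2 <= n)%N) :
  exists L : seq (int -> int),
    forall omega : int -> int,
      is_affine_perm n omega -> aff_avoids p omega ->
      exists2 j : nat, (j < size L)%N & (forall i : int, omega i = nth id L j i).
Proof.
have Hn0 : (0 < n)%N by apply: ltnW.
have [Bn HBn] : exists Bn : nat, Mz n m 0 = Bn%:Z by exists ((n.+1) * 3 ^ (m - 0))%N.
pose K := (Bn + Bn)%N.
pose F := fun (v : seq nat) (z : int) => z + (nth 0%N v (absz (modz z n%:Z)))%:Z - Bn%:Z.
exists (map F (seqs K n)).
move=> w [_ [Hper Hsum]] Hav.
have Hb := avoid_bound Hn0 Hper Hp Hav; rewrite HBn in Hb.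
have Hsum0 : \sum_(i < n) (w (i.+1)%:Z - (i.+1)%:Z) = 0.
  by rewrite sumrB Hsum sum_nat_int subrr.
have Hhas : has (fun _ : 'I_n => true) (index_enum 'I_n).
  by apply/hasP; exists (Ordinal Hn0); first exact: mem_index_enum.
have [s0 Hs0] : exists s0 : int, w s0 - s0 <= 0.
  case: (pickP (fun i : 'I_n => w (i.+1)%:Z - (i.+1)%:Z <= 0)) => [i Hi|Hall].
    by exists (i.+1)%:Z.
  exfalso.
  have := @ltr_sum _ _ (index_enum 'I_n) (fun _ => true) (fun _ => 0)
            (fun i : 'I_n => w (i.+1)%:Z - (i.+1)%:Z) Hhas.
  rewrite Hsum0 big1_eq ltxx => H; suff: false by []; apply: H => i _; by rewrite ltNge Hall.
have [r0 Hr0] : exists r0 : int, 0 <= w r0 - r0.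
  case: (pickP (fun i : 'I_n => 0 <= w (i.+1)%:Z - (i.+1)%:Z)) => [i Hi|Hall].
    by exists (i.+1)%:Z.
  exfalso.
  have := @ltr_sum _ _ (index_enum 'I_n) (fun _ => true)
            (fun i : 'I_n => w (i.+1)%:Z - (i.+1)%:Z) (fun _ => 0) Hhas.
  rewrite Hsum0 big1_eq ltxx => H; suff: false by []; apply: H => i _; by rewrite ltNge Hall.
have Hc : forall z, 0 < w z - z + Bn%:Z /\ w z - z + Bn%:Z < Bn%:Z + Bn%:Z.
  move=> z; have := Hb z s0; have := Hb r0 z; split; zlia.
pose W := [seq absz (w k%:Z - k%:Z + Bn%:Z) | k <- iota 0 n].
have HW : W \in seqs K n.
  apply: mem_seqs; first by rewrite size_map size_iota.
  apply/allP => x /mapP [k _ ->].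
  have [H1 H2] := Hc k%:Z.
  by rewrite -ltz_nat gez0_abs ?PoszD //; apply: ltW.
exists (index W (seqs K n)); first by rewrite size_map index_mem.
move=> i; rewrite (nth_map [::]) ?index_mem // nth_index // /F.
have nz : (n%:Z != 0) by rewrite eqz_nat -lt0n.
have Hmod0 := modz_ge0 i nz.
have Hk : (absz (modz i n%:Z))%:Z = modz i n%:Z by rewrite gez0_abs.
have Hkn : (absz (modz i n%:Z) < n)%N by rewrite -ltz_nat Hk ltz_pmod // ltz_nat.
move: (absz (modz i n%:Z)) Hk Hkn => k Hk Hkn.
rewrite (nth_map 0%N) ?size_iota // nth_iota // add0n.
have [H1 H2] := Hc k%:Z.
rewrite gez0_abs; last by apply: ltW.
have E := divz_eq i n%:Z.
have Hl := line Hper (modz i n%:Z) (divz i n%:Z).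
rewrite -Hk in Hl E.
have Ei : w i = w k%:Z + divz i n%:Z * n%:Z.
  by rewrite -Hl; congr w; zlia.
rewrite Ei; zlia.
Qed.
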